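(* Let $F$ be a subfield of $\mathbb{R}$, $r\in F$, and $n$ a positive integer. There is a quantifier-free formula $\theta(x,u)$ in the language of $T_{\mathrm{comm}}[F]$, in disjunctive normal form with at most $n$ disjuncts, such that $$T_{\mathrm{mult}}[F]\cup\{0\le x,\;x\le r,\;u=x^2\}\vdash\theta\quad\text{and}\quad T_{\mathrm{add}}[F]\cup\{u<2x-1\}\cup\{\theta\}\vdash\bot,$$ if and only if $r\le n/(n+1)$.
   Context: For $a\in F$, $f_a$ is a unary function symbol interpreted as $f_a(x)=ax$; a constant $c\in F$ is denoted by $f_c(1)$, $x^2$ denotes $x\times x$ and $2x$ denotes $f_2(x)$. $T_{\mathrm{add}}[F]$ is the set of sentences true in $(\mathbb{R},0,1,+,-,<,(f_a)_{a\in F})$, $T_{\mathrm{mult}}[F]$ the set of sentences true in $(\mathbb{R},0,1,\times,\div,<,(f_a)_{a\in F})$ with $x\div0=0$, and $T_{\mathrm{comm}}[F]=T_{\mathrm{add}}[F]\cap T_{\mathrm{mult}}[F]$, the theory of $(\mathbb{R},0,1,<,(f_a)_{a\in F})$. Free variables $x,u$ are treated as constants in the derivations. *)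

(* Defs.v *)
(* Deep embedding of first-order logic for the
   languages of T_add[F], T_mult[F], T_comm[F]; entailment "T u Gamma |- phi" is
   rendered as semantic consequence (Goedel completeness), with the free
   variables x := Var 0 and u := Var 1 playing the role of new constants. *)
From Stdlib Require Import Reals List.
Open Scope R_scope.

Definition is_subfield (F : R -> Prop) : Prop :=
  F 0 /\ F 1 /\
  (forall a b, F a -> F b -> F (a + b)) /\
  (forall a, F a -> F (- a)) /\
  (forall a b, F a -> F b -> F (a * b)) /\
  (forall a, F a -> a <> 0 -> F (/ a)).

(** Terms over the union of all symbols; languages are predicates below. *)
Inductive term : Type :=
| Var : nat -> term
| Zero : term
| One : term
| Add : term -> term -> term
| Sub : term -> term -> term
| Mul : term -> term -> term
| Div : term -> term -> term
| Scal : R -> term -> term.   (* Scal a t  is  f_a(t) *)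

Inductive formula : Type :=
| Fls : formula
| Eq : term -> term -> formula
| Lt : term -> term -> formula
| Not : formula -> formula
| And : formula -> formula -> formula
| Or : formula -> formula -> formula
| Imp : formula -> formula -> formula
| All : nat -> formula -> formula
| Ex : nat -> formula -> formula.

Fixpoint add_term (F : R -> Prop) (t : term) : Prop :=
  match t with
  | Var _ | Zero | One => True
  | Add s t | Sub s t => add_term F s /\ add_term F t
  | Mul _ _ | Div _ _ => False
  | Scal a s => F a /\ add_term F s
  end.
Fixpoint mult_term (F : R -> Prop) (t : term) : Prop :=
  match t with
  | Var _ | Zero | One => True
  | Mul s t | Div s t => mult_term F s /\ mult_term F t
  | Add _ _ | Sub _ _ => False
  | Scal a s => F a /\ mult_term F s
  end.
Fixpoint comm_term (F : R -> Prop) (t : term) : Prop :=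
  match t with
  | Var _ | Zero | One => True
  | Add _ _ | Sub _ _ | Mul _ _ | Div _ _ => False
  | Scal a s => F a /\ comm_term F s
  end.

Fixpoint in_lang (L : term -> Prop) (f : formula) : Prop :=
  match f with
  | Fls => True
  | Eq s t | Lt s t => L s /\ L t
  | Not g => in_lang L g
  | And g h | Or g h | Imp g h => in_lang L g /\ in_lang L h
  | All _ g | Ex _ g => in_lang L g
  end.

Fixpoint var_in (i : nat) (t : term) : Prop :=
  match t with
  | Var j => i = j
  | Zero | One => False
  | Add s t | Sub s t | Mul s t | Div s t => var_in i s \/ var_in i t
  | Scal _ s => var_in i s
  end.

Fixpoint free_in (i : nat) (f : formula) : Prop :=
  match f with
  | Fls => False
  | Eq s t | Lt s t => var_in i s \/ var_in i t
  | Not g => free_in i g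
  | And g h | Or g h | Imp g h => free_in i g \/ free_in i h
  | All j g | Ex j g => i <> j /\ free_in i g
  end.

Definition sentence (f : formula) : Prop := forall i, ~ free_in i f.

Record structure : Type := Structure {
  carrier : Type;
  s0 : carrier;
  s1 : carrier;
  sadd : carrier -> carrier -> carrier;
  ssub : carrier -> carrier -> carrier;
  smul : carrier -> carrier -> carrier;
  sdiv : carrier -> carrier -> carrier;
  sscal : R -> carrier -> carrier;
  slt : carrier -> carrier -> Prop }.

Fixpoint eval (M : structure) (env : nat -> carrier M) (t : term) : carrier M :=
  match t with
  | Var i => env i
  | Zero => s0 M
  | One => s1 M
  | Add s t => sadd M (eval M env s) (eval M env t)
  | Sub s t => ssub M (eval M env s) (eval M env t)
  | Mul s t => smul M (eval M env s) (eval M env t)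
  | Div s t => sdiv M (eval M env s) (eval M env t)
  | Scal a s => sscal M a (eval M env s)
  end.

Definition update {A : Type} (env : nat -> A) (i : nat) (d : A) : nat -> A :=
  fun j => if Nat.eqb j i then d else env j.

Fixpoint sat (M : structure) (env : nat -> carrier M) (f : formula) : Prop :=
  match f with
  | Fls => False
  | Eq s t => eval M env s = eval M env t
  | Lt s t => slt M (eval M env s) (eval M env t)
  | Not g => ~ sat M env g
  | And g h => sat M env g /\ sat M env h
  | Or g h => sat M env g \/ sat M env h
  | Imp g h => sat M env g -> sat M env h
  | All i g => forall d, sat M (update env i d) g
  | Ex i g => exists d, sat M (update env i d) g
  end.

(** The real field, with x / 0 = 0 and f_a(x) = a x. *)
Definition rdiv (x y : R) : R := if Req_EM_T y 0 then 0 else x / y.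

Definition Rstruct : structure :=
  Structure R 0 1 Rplus Rminus Rmult rdiv Rmult Rlt.

Definition Th (L : term -> Prop) (f : formula) : Prop :=
  in_lang L f /\ sentence f /\ forall env, sat Rstruct env f.

Definition T_add (F : R -> Prop) := Th (add_term F).
Definition T_mult (F : R -> Prop) := Th (mult_term F).

Definition models (M : structure) (T : formula -> Prop) : Prop :=
  forall f, T f -> forall env, sat M env f.

(** T u Gamma |- phi  (free variables of Gamma, phi treated as new constants,
    interpreted by env). *)
Definition entails (T : formula -> Prop) (Gamma : list formula) (phi : formula) : Prop :=
  forall M : structure, models M T ->
  forall env : nat -> carrier M, Forall (sat M env) Gamma -> sat M env phi.

Definition comm_literal (F : R -> Prop) (f : formula) : Prop :=
  exists s t, comm_term F s /\ comm_term F t /\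
    (f = Eq s t \/ f = Lt s t \/ f = Not (Eq s t) \/ f = Not (Lt s t)).

Definition Tru : formula := Not Fls.

Definition conj_of (c : list formula) : formula := fold_right And Tru c.
Definition dnf (D : list (list formula)) : formula := fold_right Or Fls (map conj_of D).

Definition vx : term := Var 0.
Definition vu : term := Var 1.

Definition Le (s t : term) : formula := Or (Lt s t) (Eq s t).

(* Main.v *)
Require Import Defs.
From Stdlib Require Import Reals List Lra Lia Psatz Classical FunctionalExtensionality.
Open Scope R_scope.

Lemma sat_conj M env c : sat M env (conj_of c) <-> Forall (sat M env) c.
Proof.
  induction c as [|l c IH]; simpl.
  - split; auto.
  - split.
    + intros [H1 H2]. constructor; [exact H1| apply IH; exact H2].
    + intros H. inversion H; subst. split; [assumption| apply IH; assumption].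
Qed.

Lemma sat_dnf M env D : sat M env (dnf D) <-> exists c, In c D /\ sat M env (conj_of c).
Proof.
  induction D as [|c D IH]; simpl.
  - split; [intros []| intros [c [[] _]]].
  - split.
    + intros [H|H]. exists c; auto. apply IH in H. destruct H as [c' [H1 H2]]. exists c'; auto.
    + intros [c' [[<-|H1] H2]]. left; auto. right; apply IH; eauto.
Qed.

Lemma free_conj i c : free_in i (conj_of c) <-> exists l, In l c /\ free_in i l.
Proof.
  induction c as [|l c IH]; simpl.
  - split; [intros []| intros [l [[] _]]].
  - split.
    + intros [H|H]. exists l; auto. apply IH in H. destruct H as [l' [H1 H2]]. exists l'; auto.
    + intros [l' [[<-|H1] H2]]. left; auto. right; apply IH; eauto.
Qed.

Lemma free_dnf i D : free_in i (dnf D) <-> exists c l, In c D /\ In l c /\ free_in i l.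
Proof.
  induction D as [|c D IH]; simpl.
  - split; [intros []| intros [c [l [[] _]]]].
  - split.
    + intros [H|H]. apply free_conj in H. destruct H as [l [H1 H2]]. exists c, l; auto.
      apply IH in H. destruct H as [c' [l [H1 [H2 H3]]]]. exists c', l; auto.
    + intros [c' [l [[<-|H1] [H2 H3]]]]. left; apply free_conj; eauto. right; apply IH; eauto.
Qed.

Lemma in_lang_dnf L D : (forall c l, In c D -> In l c -> in_lang L l) -> in_lang L (dnf D).
Proof.
  induction D as [|c D IH]; simpl; intros H; auto.
  split.
  - assert (Hc : forall l, In l c -> in_lang L l) by (intros; eapply H; eauto).
    clear -Hc. induction c as [|l c IHc]; simpl; auto.
    split; [apply Hc; left; auto | apply IHc; intros; apply Hc; right; auto].
  - apply IH. intros; eapply H; eauto.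
Qed.

Lemma comm_mult F t : comm_term F t -> mult_term F t.
Proof. induction t as [| | |t1 IH1 t2 IH2|t1 IH1 t2 IH2|t1 IH1 t2 IH2|t1 IH1 t2 IH2|a t IH]; simpl; tauto. Qed.
Lemma comm_add F t : comm_term F t -> add_term F t.
Proof. induction t as [| | |t1 IH1 t2 IH2|t1 IH1 t2 IH2|t1 IH1 t2 IH2|t1 IH1 t2 IH2|a t IH]; simpl; tauto. Qed.

Lemma lit_lang F L l : (forall t, comm_term F t -> L t) -> comm_literal F l -> in_lang L l.
Proof.
  intros HL Hc. destruct Hc as (s & t & Hs & Ht & H).
  destruct H as [ -> | [ -> | [ -> | -> ]]]; simpl; auto.
Qed.

Lemma update_id {A} (env : nat -> A) : update (update env 0%nat (env 0%nat)) 1%nat (env 1%nat) = env.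
Proof.
  apply functional_extensionality; intros j. unfold update.
  destruct (Nat.eqb j 1) eqn:E1. apply Nat.eqb_eq in E1; subst; auto.
  destruct (Nat.eqb j 0) eqn:E0. apply Nat.eqb_eq in E0; subst; auto. auto.
Qed.

Lemma upd0 {A} (env : nat -> A) a b : update (update env 0%nat a) 1%nat b 0%nat = a.
Proof. reflexivity. Qed.
Lemma upd1 {A} (env : nat -> A) a b : update (update env 0%nat a) 1%nat b 1%nat = b.
Proof. reflexivity. Qed.

Lemma F2 F : is_subfield F -> F 2.
Proof.
  intros (H0 & H1 & Hadd & _). replace 2 with (1+1) by ring. auto.
Qed.

Lemma transfer_mult F r th : F r ->
  in_lang (mult_term F) th -> (forall i, free_in i th -> i = 0%nat \/ i = 1%nat) ->
  (forall env : nat -> R, 0 <= env 0%nat <= r -> env 1%nat = env 0%nat * env 0%nat -> sat Rstruct env th) ->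
  entails (T_mult F) (Le Zero vx :: Le vx (Scal r One) :: Eq vu (Mul vx vx) :: nil) th.
Proof.
  intros Fr Hl Hf HR M HM env HG.
  set (phi := All 0 (All 1 (Imp (And (Le Zero vx) (And (Le vx (Scal r One)) (Eq vu (Mul vx vx)))) th))).
  assert (Hphi : T_mult F phi).
  { split; [|split].
    - simpl. tauto.
    - intros i Hi. simpl in Hi. destruct Hi as [H0 [H1 H]].
      destruct H as [H|H]; [|apply Hf in H; lia].
      unfold vx, vu in H. simpl in H. lia.
    - intros env0. simpl. intros d0 d1 [Ha [Hb Hc]].
      apply HR; rewrite ?upd0, ?upd1 in *; simpl in *; rewrite ?upd0, ?upd1 in *.
      + lra.
      + exact Hc. }
  pose proof (HM phi Hphi env) as H. simpl in H.
  specialize (H (env 0%nat) (env 1%nat)). rewrite update_id in H.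
  inversion HG as [|? ? Ha HG1]; subst. inversion HG1 as [|? ? Hb HG2]; subst.
  inversion HG2 as [|? ? Hc HG3]; subst.
  apply H. split; [exact Ha| split; [exact Hb| exact Hc]].
Qed.

Lemma transfer_add F th : is_subfield F ->
  in_lang (add_term F) th -> (forall i, free_in i th -> i = 0%nat \/ i = 1%nat) ->
  (forall env : nat -> R, sat Rstruct env th -> ~ env 1%nat < 2 * env 0%nat - 1) ->
  entails (T_add F) (Lt vu (Sub (Scal 2 vx) One) :: th :: nil) Fls.
Proof.
  intros HF Hl Hf HR M HM env HG.
  set (phi := All 0 (All 1 (Not (And (Lt vu (Sub (Scal 2 vx) One)) th)))).
  assert (Hphi : T_add F phi).
  { split; [|split].
    - simpl. pose proof (F2 F HF). tauto.
    - intros i Hi. simpl in Hi. destruct Hi as [H0 [H1 H]].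
      destruct H as [H|H]; [|apply Hf in H; lia].
      unfold vx, vu in H. simpl in H. lia.
    - intros env0. simpl. intros d0 d1 [Ha Hb].
      apply HR in Hb. apply Hb. rewrite ?upd0, ?upd1 in *; simpl in *; rewrite ?upd0, ?upd1 in *.
      lra. }
  pose proof (HM phi Hphi env) as H. simpl in H.
  specialize (H (env 0%nat) (env 1%nat)). rewrite update_id in H.
  inversion HG as [|? ? Ha HG1]; subst. inversion HG1 as [|? ? Hb HG2]; subst.
  apply H. split; assumption.
Qed.

Definition Ck (k : nat) : list formula :=
  Not (Lt (Scal (INR k) vu) (Scal (INR k - 1) vx)) ::
  Not (Lt (Scal (INR k) One) (Scal (INR k + 1) vx)) :: nil.
Definition Dn (n : nat) := map Ck (seq 1 n).

Lemma F_INR F : is_subfield F -> forall k, F (INR k).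
Proof.
  intros (H0 & H1 & Hadd & Hopp & _). induction k.
  - exact H0.
  - rewrite S_INR. auto.
Qed.

Lemma Dn_lit F n : is_subfield F -> Forall (Forall (comm_literal F)) (Dn n).
Proof.
  intros HF. pose proof HF as (H0 & H1 & Hadd & Hopp & _).
  apply Forall_forall. intros c Hc. unfold Dn in Hc. apply in_map_iff in Hc.
  destruct Hc as [k [<- _]].
  pose proof (F_INR F HF k) as Fk.
  constructor; [|constructor; [|constructor]].
  - exists (Scal (INR k) vu), (Scal (INR k - 1) vx). simpl. unfold Rminus.
    split; [tauto| split; [split; auto|]]. right; right; right; auto.
  - exists (Scal (INR k) One), (Scal (INR k + 1) vx). simpl.
    split; [tauto| split; [split; auto|]]. right; right; right; auto.
Qed.

Lemma Dn_free n i : free_in i (dnf (Dn n)) -> i = 0%nat \/ i = 1%nat.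
Proof.
  intros H. apply free_dnf in H. destruct H as [c [l [Hc [Hl Hi]]]].
  unfold Dn in Hc. apply in_map_iff in Hc. destruct Hc as [k [<- _]].
  simpl in Hl. destruct Hl as [<-|[<-|[]]]; simpl in Hi; unfold vx, vu in Hi; simpl in Hi; lia.
Qed.

Lemma cover (m : nat) (x : R) : (1 <= m)%nat -> 0 <= x -> (INR m + 1) * x <= INR m ->
  exists k, (1 <= k <= m)%nat /\ INR k - 1 <= INR k * x /\ (INR k + 1) * x <= INR k.
Proof.
  intros Hm. induction Hm as [|m Hm IH]; intros Hx Hb.
  - exists 1%nat. simpl in *. split; [lia|]. lra.
  - destruct (Rle_or_lt ((INR m + 1) * x) (INR m)) as [H|H].
    + destruct (IH Hx H) as [k [Hk R1]]. exists k. split; [lia| exact R1].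
    + exists (S m). split; [lia|]. rewrite S_INR in *. lra.
Qed.

Lemma Dn_mult n r (env : nat -> R) : (0 < n)%nat -> r <= INR n / (INR n + 1) ->
  0 <= env 0%nat <= r -> env 1%nat = env 0%nat * env 0%nat -> sat Rstruct env (dnf (Dn n)).
Proof.
  intros Hn Hr Hx Hu. set (x := env 0%nat) in *.
  assert (Hn1 : 0 < INR n + 1) by (pose proof (pos_INR n); lra).
  assert (Hb : (INR n + 1) * x <= INR n).
  { apply Rle_trans with ((INR n + 1) * r). apply Rmult_le_compat_l; lra.
    apply Rmult_le_compat_l with (r := INR n + 1) in Hr; [|lra].
    replace ((INR n + 1) * (INR n / (INR n + 1))) with (INR n) in Hr by (field; lra). exact Hr. }
  destruct (cover n x) as [k [Hk [H1 H2]]]; try lia; try lra.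
  apply sat_dnf. exists (Ck k). split.
  - unfold Dn. apply in_map. apply in_seq. lia.
  - simpl. unfold vx, vu. simpl. fold x. rewrite Hu.
    repeat split; try tauto; intros Hc; [nra | lra].
Qed.

Lemma Dn_add n (env : nat -> R) : sat Rstruct env (dnf (Dn n)) -> ~ env 1%nat < 2 * env 0%nat - 1.
Proof.
  intros H. apply sat_dnf in H. destruct H as [c [Hc Hs]].
  unfold Dn in Hc. apply in_map_iff in Hc. destruct Hc as [k [<- Hk]]. apply in_seq in Hk.
  simpl in Hs. unfold vx, vu in Hs. simpl in Hs. destruct Hs as [Ha [Hb _]].
  apply Rnot_lt_le in Ha. apply Rnot_lt_le in Hb.
  assert (Hk1 : 1 <= INR k) by (replace 1 with (INR 1) by reflexivity; apply le_INR; lia).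
  set (x := env 0%nat) in *. set (u := env 1%nat) in *.
  assert (INR k * (u - (2 * x - 1)) >= 0) by nra.
  intros Hc. nra.
Qed.

Definition env_of (x u : R) : nat -> R := fun i => match i with 0%nat => x | 1%nat => u | _ => 0 end.

Lemma term_nf F t : comm_term F t -> (forall i, var_in i t -> i = 0%nat \/ i = 1%nat) ->
  exists a b c, (forall x u, eval Rstruct (env_of x u) t = a * x + b * u + c) /\
    ((b = 0 /\ c = 0) \/ (a = 0 /\ c = 0) \/ (a = 0 /\ b = 0)).
Proof.
  induction t as [j| | |t1 IH1 t2 IH2|t1 IH1 t2 IH2|t1 IH1 t2 IH2|t1 IH1 t2 IH2|r t IH];
    simpl; intros Hc Hv; try contradiction.
  - destruct (Hv j eq_refl) as [->| ->].
    + exists 1, 0, 0. split; [intros; simpl; ring| lra].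
    + exists 0, 1, 0. split; [intros; simpl; ring| lra].
  - exists 0, 0, 0. split; [intros; simpl; ring| lra].
  - exists 0, 0, 1. split; [intros; simpl; ring| lra].
  - destruct Hc as [_ Hc]. destruct (IH Hc Hv) as [a [b [c [He Hk]]]].
    exists (r * a), (r * b), (r * c). split.
    + intros. rewrite He. simpl. ring.
    + destruct Hk as [[ -> -> ]|[[ -> -> ]|[ -> -> ]]]; [left|right;left|right;right]; split; ring.
Qed.

Definition goodP (P : R -> Prop) : Prop :=
  (forall t z, 0 < t -> P z -> P (t * z)) /\
  (forall B K w1 w2, w1 < w2 -> P (B * w1 + K) -> P (B * w2 + K) ->
     exists p, forall v, w1 <= v <= w2 -> v <> p -> P (B * v + K)).

Lemma good_lt : goodP (fun z => z < 0).
Proof.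
  split.
  - intros; nra.
  - intros B K w1 w2 Hw H1 H2. exists 0. intros v Hv _.
    destruct (Rle_or_lt 0 B). nra. nra.
Qed.
Lemma good_nlt : goodP (fun z => ~ z < 0).
Proof.
  split.
  - intros t z Ht Hz H. apply Hz. nra.
  - intros B K w1 w2 Hw H1 H2. exists 0. intros v Hv _.
    apply Rle_not_lt. apply Rnot_lt_le in H1. apply Rnot_lt_le in H2.
    destruct (Rle_or_lt 0 B). nra. nra.
Qed.
Lemma good_eq : goodP (fun z => z = 0).
Proof.
  split.
  - intros t z Ht ->. ring.
  - intros B K w1 w2 Hw H1 H2. exists 0. intros v Hv _.
    assert (HB : B * (w2 - w1) = 0) by lra.
    apply Rmult_integral in HB. destruct HB as [HB|HB]; [|lra].
    subst B. lra.
Qed.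
Lemma good_neq : goodP (fun z => z <> 0).
Proof.
  split.
  - intros t z Ht Hz. apply Rmult_integral_contrapositive_currified; lra.
  - intros B K w1 w2 Hw H1 H2.
    destruct (Req_dec B 0) as [->|HB].
    + exists 0. intros v _ _. replace (0 * v + K) with (0 * w1 + K) by ring. exact H1.
    + exists (- K / B). intros v _ Hv Hc. apply Hv. field_simplify_eq; [|exact HB]. lra.
Qed.

Lemma core (P : R -> Prop) (HP : goodP P) A B C x1 x2 :
  (A = 0 \/ B = 0 \/ C = 0) -> 0 < x1 < x2 ->
  P (A * x1 + B * (x1 * x1) + C) -> P (A * x2 + B * (x2 * x2) + C) ->
  exists p, forall v, x1 * x2 <= v <= x2 * x2 -> v <> p -> P (A * x2 + B * v + C).
Proof.
  intros Habc Hx H1 H2. destruct HP as [Hs Hc].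
  destruct Habc as [ -> | [ -> | -> ]].
  - destruct (Hc B C (x1 * x1) (x2 * x2)) as [p Hp].
    + nra.
    + replace (B * (x1 * x1) + C) with (0 * x1 + B * (x1 * x1) + C) by ring. exact H1.
    + replace (B * (x2 * x2) + C) with (0 * x2 + B * (x2 * x2) + C) by ring. exact H2.
    + exists p. intros v Hv Hvp. replace (0 * x2 + B * v + C) with (B * v + C) by ring.
      apply Hp; [nra| exact Hvp].
  - exists 0. intros v _ _. replace (A * x2 + 0 * v + C) with (A * x2 + 0 * (x2 * x2) + C) by ring.
    exact H2.
  - assert (H1' : P (B * (x1 * x2) + A * x2)).
    { replace (B * (x1 * x2) + A * x2) with ((x2 / x1) * (A * x1 + B * (x1 * x1) + 0)) by (field; lra).
      apply Hs; [apply Rdiv_lt_0_compat; lra| exact H1]. }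
    destruct (Hc B (A * x2) (x1 * x2) (x2 * x2)) as [p Hp].
    + nra.
    + exact H1'.
    + replace (B * (x2 * x2) + A * x2) with (A * x2 + B * (x2 * x2) + 0) by ring. exact H2.
    + exists p. intros v Hv Hvp. replace (A * x2 + B * v + 0) with (B * v + A * x2) by ring.
      apply Hp; [exact Hv| exact Hvp].
Qed.

Lemma lit_lemma F l x1 x2 : comm_literal F l -> (forall i, free_in i l -> i = 0%nat \/ i = 1%nat) ->
  0 < x1 < x2 -> sat Rstruct (env_of x1 (x1 * x1)) l -> sat Rstruct (env_of x2 (x2 * x2)) l ->
  exists p, forall v, x1 * x2 <= v <= x2 * x2 -> v <> p -> sat Rstruct (env_of x2 v) l.
Proof.
  intros (s & t & Hs & Ht & Hl) Hf Hx.
  assert (Hvs : forall i, var_in i s -> i = 0%nat \/ i = 1%nat).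
  { intros i Hi; apply Hf; destruct Hl as [ -> | [ -> | [ -> | -> ]]]; simpl; auto. }
  assert (Hvt : forall i, var_in i t -> i = 0%nat \/ i = 1%nat).
  { intros i Hi; apply Hf; destruct Hl as [ -> | [ -> | [ -> | -> ]]]; simpl; auto. }
  destruct (term_nf F s Hs Hvs) as [a1 [b1 [c1 [Es Ks]]]].
  destruct (term_nf F t Ht Hvt) as [a2 [b2 [c2 [Et Kt]]]].
  assert (Habc : (a1 - a2) = 0 \/ (b1 - b2) = 0 \/ (c1 - c2) = 0).
  { destruct Ks as [[? ?]|[[? ?]|[? ?]]]; destruct Kt as [[? ?]|[[? ?]|[? ?]]];
      first [left; lra | right; left; lra | right; right; lra]. }
  assert (Ediff : forall x u, eval Rstruct (env_of x u) s - eval Rstruct (env_of x u) t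
                  = (a1 - a2) * x + (b1 - b2) * u + (c1 - c2)).
  { intros. rewrite Es, Et. ring. }
  destruct Hl as [ -> | [ -> | [ -> | -> ]]]; simpl; intros H1 H2.
  - destruct (core _ good_eq _ _ _ x1 x2 Habc Hx) as [p Hp].
    + rewrite <- Ediff. simpl in H1. rewrite H1. ring.
    + rewrite <- Ediff. simpl in H2. rewrite H2. ring.
    + exists p. intros v Hv Hvp. specialize (Hp v Hv Hvp). rewrite <- Ediff in Hp. lra.
  - destruct (core _ good_lt _ _ _ x1 x2 Habc Hx) as [p Hp].
    + rewrite <- Ediff. simpl in H1. lra.
    + rewrite <- Ediff. simpl in H2. lra.
    + exists p. intros v Hv Hvp. specialize (Hp v Hv Hvp). rewrite <- Ediff in Hp. simpl. lra.
  - destruct (core _ good_neq _ _ _ x1 x2 Habc Hx) as [p Hp].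
    + rewrite <- Ediff. simpl in H1. lra.
    + rewrite <- Ediff. simpl in H2. lra.
    + exists p. intros v Hv Hvp. specialize (Hp v Hv Hvp). rewrite <- Ediff in Hp. simpl. lra.
  - destruct (core _ good_nlt _ _ _ x1 x2 Habc Hx) as [p Hp].
    + rewrite <- Ediff. simpl in H1. lra.
    + rewrite <- Ediff. simpl in H2. lra.
    + exists p. intros v Hv Hvp. specialize (Hp v Hv Hvp). rewrite <- Ediff in Hp. simpl. lra.
Qed.

Lemma conj_lemma F c x1 x2 : Forall (comm_literal F) c ->
  (forall l, In l c -> forall i, free_in i l -> i = 0%nat \/ i = 1%nat) ->
  0 < x1 < x2 -> sat Rstruct (env_of x1 (x1 * x1)) (conj_of c) -> sat Rstruct (env_of x2 (x2 * x2)) (conj_of c) ->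
  exists L, forall v, x1 * x2 <= v <= x2 * x2 -> ~ In v L -> sat Rstruct (env_of x2 v) (conj_of c).
Proof.
  intros Hc Hf Hx. induction c as [|l c IH]; intros H1 H2.
  - exists nil. intros; simpl; auto.
  - inversion Hc; subst. destruct H1 as [H1a H1b]. destruct H2 as [H2a H2b].
    destruct (lit_lemma F l x1 x2) as [p Hp]; auto.
    { intros i Hi. apply (Hf l); simpl; auto. }
    destruct IH as [L HL]; auto.
    { intros l' Hl'. apply Hf. simpl; auto. }
    exists (p :: L). intros v Hv Hn. split.
    + apply Hp; auto. intros ->. apply Hn. simpl; auto.
    + apply HL; auto. intros Hin. apply Hn. simpl; auto.
Qed.

Lemma avoid (L : list R) : forall a b, a < b -> exists v, a <= v < b /\ ~ In v L.
Proof.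
  induction L as [|p L IH]; intros a b Hab.
  - exists a. split; [lra| auto].
  - destruct (Rlt_or_le p ((a + b) / 2)) as [H|H].
    + destruct (IH ((a + b) / 2) b) as [v [Hv Hn]]; [lra|].
      exists v. split; [lra|]. intros [E|E]; [lra| auto].
    + destruct (IH a ((a + b) / 2)) as [v [Hv Hn]]; [lra|].
      exists v. split; [lra|]. intros [E|E]; [lra| auto].
Qed.

Lemma pig (H : list formula -> nat -> Prop) : forall k D, (length D <= k)%nat ->
  (forall i, (i <= k)%nat -> exists c, In c D /\ H c i) ->
  exists i j c, (i < j <= k)%nat /\ In c D /\ H c i /\ H c j.
Proof.
  induction k as [|k IH]; intros D HD Hw.
  - destruct (Hw 0%nat (le_n 0)) as [c [Hc _]]. destruct D; simpl in *; [contradiction| lia].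
  - destruct (Hw (S k) (le_n _)) as [c [Hc HcS]].
    destruct (classic (exists i, (i <= k)%nat /\ H c i)) as [[i [Hi Hci]]|Hno].
    + exists i, (S k), c. repeat split; auto; lia.
    + apply in_split in Hc. destruct Hc as [D1 [D2 ->]].
      destruct (IH (D1 ++ D2)) as [i [j [c' [Hij [Hin [Hi Hj]]]]]].
      * rewrite length_app in *. simpl in HD. lia.
      * intros i Hi. destruct (Hw i ltac:(lia)) as [c' [Hc' Hci]].
        exists c'. split; auto. apply in_app_or in Hc'. apply in_or_app.
        destruct Hc' as [Hc'|[E|Hc']]; auto. subst c'. exfalso. apply Hno. eauto.
      * exists i, j, c'. repeat split; auto; try lia.
        apply in_app_or in Hin. apply in_or_app. simpl. tauto.
Qed.

Lemma pts q I J : 0 < q < 1 -> 1 <= I -> I + 1 <= J ->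
  0 < 1 - q / I < 1 - q / J /\ (1 - q / I) * (1 - q / J) < 2 * (1 - q / J) - 1.
Proof.
  intros Hq HI HJ.
  assert (E1 : 1 - q / I = (I - q) / I) by (field; lra).
  assert (E2 : (1 - q / J) - (1 - q / I) = q * (J - I) / (I * J)) by (field; lra).
  assert (E3 : 2 * (1 - q / J) - 1 - (1 - q / I) * (1 - q / J) = q * (J - I - q) / (I * J)) by (field; lra).
  assert (P1 : 0 < (I - q) / I) by (apply Rdiv_lt_0_compat; lra).
  assert (P2 : 0 < q * (J - I) / (I * J)) by (apply Rdiv_lt_0_compat; [apply Rmult_lt_0_compat|apply Rmult_lt_0_compat]; lra).
  assert (P3 : 0 < q * (J - I - q) / (I * J)) by (apply Rdiv_lt_0_compat; [apply Rmult_lt_0_compat|apply Rmult_lt_0_compat]; lra).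
  lra.
Qed.

Lemma pt_le q I N r : 0 < q -> 1 <= I -> I <= N -> N * (1 - r) <= q -> 1 - q / I <= r.
Proof.
  intros Hq HI HN Hr.
  assert (E1 : q / I - q / N = q * (N - I) / (I * N)) by (field; lra).
  assert (E2 : q / N - (1 - r) = (q - N * (1 - r)) / N) by (field; lra).
  assert (P1 : 0 <= q * (N - I) / (I * N)).
  { apply Rmult_le_pos. apply Rmult_le_pos; lra. left; apply Rinv_0_lt_compat; nra. }
  assert (P2 : 0 <= (q - N * (1 - r)) / N).
  { apply Rmult_le_pos. lra. left; apply Rinv_0_lt_compat; lra. }
  lra.
Qed.

Lemma models_R F : models Rstruct (T_mult F).
Proof. intros f [_ [_ H]]. exact H. Qed.
Lemma models_RA F : models Rstruct (T_add F).
Proof. intros f [_ [_ H]]. exact H. Qed.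

Theorem theorem5p4 (F : R -> Prop) (HF : is_subfield F) (r : R) (Hr : F r)
  (n : nat) (Hn : (0 < n)%nat) :
  (exists D : list (list formula),
      (length D <= n)%nat /\
      Forall (Forall (comm_literal F)) D /\
      (forall i, free_in i (dnf D) -> i = 0%nat \/ i = 1%nat) /\
      entails (T_mult F)
        (Le Zero vx :: Le vx (Scal r One) :: Eq vu (Mul vx vx) :: nil) (dnf D) /\
      entails (T_add F)
        (Lt vu (Sub (Scal 2 vx) One) :: dnf D :: nil) Fls)
  <-> r <= INR n / (INR n + 1).
Proof.
  split.
  - intros [D [Hlen [Hlit [Hfree [Hm Ha]]]]].
    destruct (Rle_or_lt r (INR n / (INR n + 1))) as [Hle|Hlt]; [exact Hle|exfalso].
    set (N := INR n + 1).
    assert (HN : 1 <= N) by (unfold N; pose proof (pos_INR n); lra).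
    assert (HrN : INR n < r * N).
    { apply Rmult_lt_compat_r with (r := N) in Hlt; [|lra].
      replace (INR n / (INR n + 1) * N) with (INR n) in Hlt by (unfold N; field; pose proof (pos_INR n); lra). exact Hlt. }
    set (q := Rmax (1/2) ((N * (1 - r) + 1) / 2)).
    assert (Hq1 : 1/2 <= q) by apply Rmax_l.
    assert (Hq2 : (N * (1 - r) + 1) / 2 <= q) by apply Rmax_r.
    assert (Hq3 : q < 1).
    { assert (HN1 : N * (1 - r) < 1) by (unfold N in *; nra). unfold q; apply Rmax_lub_lt; lra. }
    assert (HN1 : N * (1 - r) < 1) by (unfold N in *; nra).
    assert (HqN : N * (1 - r) <= q) by lra.
    set (xs := fun i : nat => 1 - q / (INR i + 1)).
    assert (HI : forall i, 1 <= INR i + 1) by (intros; pose proof (pos_INR i); lra).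
    assert (Hw : forall i, (i <= n)%nat -> exists c, In c D /\
               sat Rstruct (env_of (xs i) (xs i * xs i)) (conj_of c)).
    { intros i Hi. apply sat_dnf. apply (Hm Rstruct (models_R F)).
      assert (Hpos : 0 < xs i).
      { destruct (pts q (INR i + 1) (INR i + 2)) as [[H _] _]; [lra|auto|lra|exact H]. }
      assert (Hler : xs i <= r).
      { apply (pt_le q _ N); try lra; auto. unfold N. apply Rplus_le_compat_r. apply le_INR; exact Hi. }
      constructor; [simpl; lra|constructor; [simpl; lra| constructor; [simpl; reflexivity| constructor]]]. }
    destruct (pig (fun c i => sat Rstruct (env_of (xs i) (xs i * xs i)) (conj_of c)) n D Hlen Hw)
      as [i [j [c [Hij [Hc [Hci Hcj]]]]]].
    assert (HIJ : INR i + 1 + 1 <= INR j + 1).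
    { rewrite <- S_INR. apply Rplus_le_compat_r. apply le_INR. lia. }
    destruct (pts q (INR i + 1) (INR j + 1)) as [[Hx1 Hx12] Hkey]; [lra|auto|lra|].
    fold (xs i) in Hx1, Hx12, Hkey. fold (xs j) in Hx12, Hkey.
    destruct (conj_lemma F c (xs i) (xs j)) as [L HL].
    + rewrite Forall_forall in Hlit. apply Hlit. exact Hc.
    + intros l Hl k Hk. apply Hfree. apply free_dnf. exists c, l. auto.
    + lra.
    + exact Hci.
    + exact Hcj.
    + destruct (avoid L (xs i * xs j) (Rmin (xs j * xs j) (2 * xs j - 1))) as [v [Hv Hnv]].
      { apply Rmin_glb_lt; nra. }
      pose proof (Rmin_l (xs j * xs j) (2 * xs j - 1)).
      pose proof (Rmin_r (xs j * xs j) (2 * xs j - 1)).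
      apply (Ha Rstruct (models_RA F) (env_of (xs j) v)).
      constructor; [simpl; lra|]. constructor; [|constructor].
      apply sat_dnf. exists c. split; [exact Hc|]. apply HL; [lra| exact Hnv].
  - intros Hle. exists (Dn n). split; [|split; [|split; [|split]]].
    + unfold Dn. rewrite length_map, length_seq. lia.
    + apply Dn_lit; exact HF.
    + apply Dn_free.
    + apply transfer_mult; auto.
      * apply in_lang_dnf. intros c l Hc Hl. apply (lit_lang F); [apply comm_mult|].
        pose proof (Dn_lit F n HF) as H. rewrite Forall_forall in H. specialize (H c Hc).
        rewrite Forall_forall in H. auto.
      * apply Dn_free.
      * intros env Hx Hu. apply Dn_mult with (r := r); auto.
    + apply transfer_add; auto.
      * apply in_lang_dnf. intros c l Hc Hl. apply (lit_lang F); [apply comm_add|].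
        pose proof (Dn_lit F n HF) as H. rewrite Forall_forall in H. specialize (H c Hc).
        rewrite Forall_forall in H. auto.
      * apply Dn_free.
      * intros env H. apply Dn_add with (n := n). exact H.
Qed.
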